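(* Let $L=\{0,1,\dots,m\}^n$ with componentwise order, and let $f_1,\dots,f_n:L\to L$ be inflationary. Consider one round $t$ of a non-interleaving execution with update-only-on-change starting from the committed state $G_t$, in which the functions $f_i$, $i\in S_t$, are executed. Then for every coordinate $j$: (1) every write to coordinate $j$ during round $t$ writes a value $\ge G_t[j]$; (2) $G_{t+1}[j]\ge G_t[j]$; (3) $G_{t+1}[j]=G_t[j]$ if and only if no write to coordinate $j$ occurs during round $t$.
   Context: Non-interleaving execution with update-only-on-change: execution proceeds in rounds $t=0,1,2,\dots$ with committed states $G_t\in L$. In round $t$ a set $S_t\subseteq\{1,\dots,n\}$ is chosen and each $f_i$, $i\in S_t$, is executed concurrently on shared memory: process $i$ reads a vector $X\in L$, where each coordinate $X[k]$ is read at some time during the round and returns either $G_t[k]$ or the value of some write to coordinate $k$ performed during the round (reads and writes overlapping arbitrarily; no memory consistency guarantee). Process $i$ computes $H=f_i(X)$ and, for each coordinate $k$, issues a write of $H[k]$ to coordinate $k$ if and only if $H[k]\neq X[k]$ (update-only-on-change). When several writes to the same coordinate occur, the final value is the value of one of them (last writer wins, in an arbitrary order). At the end of the round, $G_{t+1}[k]$ equals $G_t[k]$ if no write to coordinate $k$ occurred, and otherwise equals the value of one of the writes to coordinate $k$ during the round. A function $f$ is inflationary if $f(G)\ge G$ for all $G$. *)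

(* Defs.v *)
From mathcomp Require Import all_boot all_order.
Set Implicit Arguments. Unset Strict Implicit. Unset Printing Implicit Defensive.

Definition Lat (n m : nat) := {ffun 'I_n -> 'I_m.+1}.

Definition leL n m (G H : Lat n m) : Prop := forall k : 'I_n, (G k <= H k)%N.

Definition inflationary n m (f : Lat n m -> Lat n m) : Prop :=
  forall G : Lat n m, leL G (f G).

(* One round of a non-interleaving execution with update-only-on-change.
   - G : committed state G_t;  S : the set S_t of executed processes;
   - X i : the vector read by process i (for i in S);
   - process i writes (f i (X i)) k to coordinate k iff i \in S and
     (f i (X i)) k != (X i) k;
   - each read coordinate returns G k or the value of some write to k in the round;
   - G' : the committed state G_{t+1}. *)
Definition writes n m (f : 'I_n -> Lat n m -> Lat n m) (S : {set 'I_n})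
  (X : 'I_n -> Lat n m) (i k : 'I_n) : bool :=
  (i \in S) && (f i (X i) k != X i k).

Definition valid_round n m (f : 'I_n -> Lat n m -> Lat n m) (S : {set 'I_n})
  (G : Lat n m) (X : 'I_n -> Lat n m) (G' : Lat n m) : Prop :=
  (forall i k, i \in S ->
     X i k = G k \/ exists i', writes f S X i' k /\ X i k = f i' (X i') k) /\
  (forall k, (forall i, ~~ writes f S X i k) -> G' k = G k) /\
  (forall k, (exists i, writes f S X i k) ->
     exists i, writes f S X i k /\ G' k = f i (X i) k).

(* Main.v *)
Require Import Defs.
From mathcomp Require Import all_boot all_order.

Theorem lemma1 (n m : nat) (f : 'I_n -> Lat n m -> Lat n m)
  (S : {set 'I_n}) (G : Lat n m) (X : 'I_n -> Lat n m) (G' : Lat n m) :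
  (forall i, inflationary (f i)) ->
  valid_round f S G X G' ->
  forall j : 'I_n,
    (forall i, writes f S X i j -> (G j <= f i (X i) j)%N) /\
    (G j <= G' j)%N /\
    (G' j = G j <-> ~ exists i, writes f S X i j).
Proof.
move=> Hinf [Hr [Hno Hyes]] j.
have key : forall v i, writes f S X i j -> nat_of_ord (f i (X i) j) = v ->
    (G j < f i (X i) j)%N.
  elim/ltn_ind => v IH i Hw Hv.
  have Hlt : (X i j < f i (X i) j)%N.
    have := Hinf i (X i) j; rewrite leq_eqVlt.
    move: Hw; rewrite /writes => /andP [_ Hne].
    by case/orP => // /eqP /val_inj E; rewrite E eqxx in Hne.
  move: (Hw); rewrite /writes => /andP [HS _].
  case: (Hr i j HS) => [E | [i' [Hw' E]]].
    by rewrite -E.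
  have Hlt' : (nat_of_ord (f i' (X i') j) < v)%N by rewrite -Hv -E.
  have Hi' := IH _ Hlt' i' Hw' erefl.
  rewrite -E in Hi'; exact: ltn_trans Hi' Hlt.
have key' : forall i, writes f S X i j -> (G j < f i (X i) j)%N.
  by move=> i Hw; apply: (key _ i Hw erefl).
split; first by move=> i Hw; apply: ltnW; apply: key'.
have [Hex | Hnex] := boolP [exists i, writes f S X i j].
  move/existsP: Hex => [i Hi].
  have [i0 [Hw0 E0]] := Hyes j (ex_intro _ i Hi).
  have Hlt := key' i0 Hw0.
  split; first by rewrite E0 ltnW.
  split=> [E|HH]; last by exfalso; apply: HH; exists i. by rewrite -E0 E ltnn in Hlt.
have Hn : forall i, ~~ writes f S X i j.
  by move=> i; apply/negP => Hw; move/negP: Hnex; apply; apply/existsP; exists i.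
have E := Hno j Hn.
rewrite E; split => //; split => // _ [i Hi].
by move/negP: (Hn i).
Qed.
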